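(* Let $n\geq 2$. If $A$ is an $L_n$-good $n\times n$ matrix, then so is every matrix obtained from $A$ by a cyclic permutation of its rows, i.e. every matrix $B$ with rows $B_i=A_{i+k}$ ($1\leq i\leq n$, indices taken modulo $n$ in $\{1,\ldots,n\}$) for some fixed integer $k$. In particular, the matrix $C$ with $C_{i,n+1-i}=1$ for $1\leq i\leq n$ and all other entries $0$ is $L_n$-good.
   Context: For $n\geq 2$, the Lucas cube $L_n$ is identified with the set of vectors $\vec{x}=(x_1,\ldots,x_n)\in\mathbb{Z}_2^n$ with no two cyclically adjacent ones: there is no $i\in\{1,\ldots,n-1\}$ with $x_i=x_{i+1}=1$, and not both $x_1=1$ and $x_n=1$. An $n\times n$ matrix $A$ over $\mathbb{Z}_2$ is $L_n$-good if it is invertible and $A\vec{x}\in L_n$ for all $\vec{x}\in L_n$. $A_i$ denotes the $i$-th row of $A$. *)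

(* Defs.v *)
From mathcomp Require Import all_boot all_order all_algebra.
Set Implicit Arguments. Unset Strict Implicit. Unset Printing Implicit Defensive.
Import GRing.Theory Num.Theory.
Local Open Scope ring_scope.

(* Vectors of Z_2^n are column vectors 'cV['F_2]_n; index i : 'I_n stands for
   position i+1 of the paper. *)

Definition lucas (n : nat) (x : 'cV['F_2]_n) : bool :=
  [forall i : 'I_n, forall j : 'I_n,
     ((j : nat) == (i.+1 %% n)%N) ==> ~~ ((x i 0 == 1) && (x j 0 == 1))].

Definition Ln_good (n : nat) (A : 'M['F_2]_n) : Prop :=
  A \in unitmx /\ forall x : 'cV['F_2]_n, lucas x -> lucas (A *m x).

Definition cshift (n : nat) (k : int) (i : 'I_n) : nat :=
  `|((Posz i + k) %% Posz n)%Z|%N.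

Lemma cshift_lt (n : nat) (k : int) (i : 'I_n) : (cshift k i < n)%N.
Proof.
have n0 : (0 < n)%N by case: n i => [[]|].
rewrite /cshift -ltz_nat gez0_abs ?modz_ge0 ?ltz_pmod //;
  by rewrite eqz_nat -lt0n.
Qed.

Definition row_cshift (n : nat) (k : int) (A : 'M['F_2]_n) : 'M['F_2]_n :=
  \matrix_(i < n, j < n) A (Ordinal (cshift_lt k i)) j.

Definition antidiag (n : nat) : 'M['F_2]_n :=
  \matrix_(i < n, j < n) (if (i + j == n.-1)%N then 1 else 0).

(* Main.v *)
Require Import Defs.
From mathcomp Require Import all_boot all_order all_algebra.
From mathcomp Require Import zify perm.
Set Implicit Arguments. Unset Strict Implicit. Unset Printing Implicit Defensive.
Local Open Scope ring_scope.

Lemma lucas_rperm n (s : {perm 'I_n}) (x : 'cV['F_2]_n) :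
  (forall i j : 'I_n, (j : nat) = (i.+1 %% n)%N ->
     (s j : nat) = ((s i).+1 %% n)%N \/ (s i : nat) = ((s j).+1 %% n)%N) ->
  lucas x -> lucas (row_perm s x).
Proof.
move=> hs /forallP hx; apply/forallP => i; apply/forallP => j; apply/implyP.
move/eqP=> hij; rewrite !mxE.
case: (hs i j hij) => h.
- by have := forallP (hx (s i)) (s j); rewrite h eqxx.
- by have := forallP (hx (s j)) (s i); rewrite h eqxx /= andbC.
Qed.

Lemma good_rperm n (s : {perm 'I_n}) (A : 'M['F_2]_n) :
  (forall i j : 'I_n, (j : nat) = (i.+1 %% n)%N ->
     (s j : nat) = ((s i).+1 %% n)%N \/ (s i : nat) = ((s j).+1 %% n)%N) ->
  Ln_good A -> Ln_good (row_perm s A).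
Proof.
move=> hs [uA hA]; split.
  by rewrite row_permE unitmx_mul unitmx_perm uA.
move=> x hx; have -> : row_perm s A *m x = row_perm s (A *m x).
  by rewrite !row_permE mulmxA.
by apply: lucas_rperm => //; apply: hA.
Qed.

Lemma cshiftE n (k : int) (i : 'I_n) :
  cshift k i = ((i + `|(k %% Posz n)%Z|%N) %% n)%N.
Proof.
rewrite /cshift -modzDmr.
have hk : (0 <= (k %% Posz n)%Z)%R.
  case: n i => [[]//|n] i; by rewrite modz_ge0.
rewrite -(gez0_abs hk) -PoszD modz_nat. by [].
Qed.

Theorem corollary3 (n : nat) : (2 <= n)%N ->
  (forall (A : 'M['F_2]_n) (k : int), Ln_good A -> Ln_good (row_cshift k A))
  /\ Ln_good (antidiag n).
Proof.
move=> n2; split.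
  move=> A k hA.
  set m := `|(k %% Posz n)%Z|%N.
  have inj : injective (fun i : 'I_n => Ordinal (cshift_lt k i)).
    move=> i j /(congr1 val) /=; rewrite !cshiftE => /eqP.
    rewrite eqn_modDr => /eqP; rewrite !modn_small // => h; exact: val_inj.
  have -> : row_cshift k A = row_perm (perm inj) A.
    by apply/matrixP => i j; rewrite !mxE permE.
  apply: good_rperm => // i j hij; left; rewrite !permE /= !cshiftE hij.
  by rewrite modnDml -[((_ %% n).+1)%N]addn1 modnDml addnAC addn1.
have inj : injective (@rev_ord n) by apply: rev_ord_inj.
have -> : antidiag n = row_perm (perm inj) 1%:M.
  apply/matrixP => i j; rewrite !mxE permE /=.
  have -> : ((i + j)%N == n.-1) = (rev_ord i == j).
    apply/eqP/eqP.
      move=> h; apply: val_inj => /=; lia.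
    move=> <- /=; have := ltn_ord i; lia.
  by case: (rev_ord i == j).
apply: good_rperm.
  move=> i j hij; right; rewrite !permE /=.
  have hi := ltn_ord i; have hj := ltn_ord j.
  case: (ltnP i.+1 n) => h.
    rewrite modn_small // in hij; rewrite modn_small; lia.
  have ei : (i : nat) = n.-1 by lia.
  have : (i.+1 %% n = 0)%N by rewrite ei prednK ?modnn //; lia.
  move=> e; rewrite e in hij; rewrite hij ei prednK; last lia.
  have -> : ((n - 1).+1 = n)%N by lia.
  by rewrite modnn subnn.
split; first by rewrite unitmx1.
by move=> x hx; rewrite mul1mx.
Qed.
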